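(* For every $\delta\in(0,1]$ there is $c>0$ such that every eigenvalue $\lambda$ of the matrix $a(u)^{-1}m(u)$ satisfies $\lambda\ge c$, for all $u\in\mathbb{R}^3$ with $|u|\le1-\delta$.
   Context: $\rho\in C_0^\infty(\mathbb{R}^3)$ radial with $\mathsf e=\int\rho\neq0$, $\hat\rho(k)=(2\pi)^{-3/2}\int\rho e^{-ik\cdot x}$. For $|u|<1$: $\gamma=(1-|u|^2)^{-1/2}$, $m_0(u)w=\gamma w+\gamma^3(u\cdot w)u$, $m_e=\frac13\int|\hat\rho(k)|^2|k|^{-2}dk$, $\varphi(s)=\frac{1}{2s^2(1-s^2)}-\frac{1}{4s^3}\log\frac{1+s}{1-s}$, $m_f(u)w=3m_e(\varphi(|u|)w+|u|^{-1}\varphi'(|u|)(u\cdot w)u)$, $m=m_0+m_f$, $a(u)w=\frac{\mathsf e^2}{12\pi}[\gamma^4w+4\gamma^6(u\cdot w)u]$. *)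

(* Defs.v *)
From HB Require Import structures.
From mathcomp Require Import all_boot all_order all_algebra.
From mathcomp Require Import all_classical all_reals all_analysis.

Set Implicit Arguments.
Unset Strict Implicit.
Unset Printing Implicit Defensive.

Import Order.TTheory GRing.Theory Num.Theory.
Import numFieldNormedType.Exports.
Local Open Scope classical_set_scope.
Local Open Scope ring_scope.

Section Defs.
Variable R : realType.

Definition dot3 (u w : 'rV[R]_3) : R := \sum_(i < 3) u 0 i * w 0 i.
Definition eucl3 (u : 'rV[R]_3) : R := Num.sqrt (dot3 u u).

Definition leb3 := (((@lebesgue_measure R) \x (@lebesgue_measure R)) \x (@lebesgue_measure R))%E.

Definition vec3 (p : (R * R) * R) : 'rV[R]_3 :=
  \row_(i < 3) nth 0 [:: p.1.1; p.1.2; p.2] i.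

Definition int3 (f : 'rV[R]_3 -> R) : R :=
  Rintegral leb3 setT (fun p => f (vec3 p)).

(* Smoothness: C^infinity via iterated directional derivatives
   (all directional derivatives of all orders exist everywhere and are continuous). *)
Fixpoint Ck (n : nat) (f : 'rV[R]_3 -> R) : Prop :=
  match n with
  | 0%N => continuous f
  | k.+1 => continuous f /\ (forall x v, derivable f x v) /\
            (forall v, Ck k (fun x => 'D_v f x))
  end.
Definition smooth3 (f : 'rV[R]_3 -> R) : Prop := forall n, Ck n f.

Definition compact_support3 (f : 'rV[R]_3 -> R) : Prop :=
  exists r : R, forall x, r < eucl3 x -> f x = 0.

Definition radial3 (f : 'rV[R]_3 -> R) : Prop :=
  forall x y, eucl3 x = eucl3 y -> f x = f y.

Definition total_charge (rho : 'rV[R]_3 -> R) : R := int3 rho.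

(* Fourier transform hat rho(k) = (2 pi)^{-3/2} \int rho(x) e^{-i k.x} dx,
   split into real and imaginary parts. *)
Definition fourier_re (rho : 'rV[R]_3 -> R) (k : 'rV[R]_3) : R :=
  (Num.sqrt ((2 * pi) ^+ 3))^-1 * int3 (fun x => rho x * cos (dot3 k x)).
Definition fourier_im (rho : 'rV[R]_3 -> R) (k : 'rV[R]_3) : R :=
  - ((Num.sqrt ((2 * pi) ^+ 3))^-1 * int3 (fun x => rho x * sin (dot3 k x))).
Definition fourier_abs2 (rho : 'rV[R]_3 -> R) (k : 'rV[R]_3) : R :=
  fourier_re rho k ^+ 2 + fourier_im rho k ^+ 2.

Definition m_e (rho : 'rV[R]_3 -> R) : R :=
  3^-1 * int3 (fun k => fourier_abs2 rho k / eucl3 k ^+ 2).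

Definition gamma (u : 'rV[R]_3) : R := (Num.sqrt (1 - eucl3 u ^+ 2))^-1.

(* phi(s), extended at s = 0 by its limit 1/3 (removable singularity). *)
Definition phi (s : R) : R :=
  if s == 0 then 3^-1
  else (2 * s ^+ 2 * (1 - s ^+ 2))^-1 - (4 * s ^+ 3)^-1 * ln ((1 + s) / (1 - s)).

(* u^T u : the matrix of w |-> (u.w) u (symmetric) *)
Definition outer3 (u : 'rV[R]_3) : 'M[R]_3 := u^T *m u.

Definition m0 (u : 'rV[R]_3) : 'M[R]_3 :=
  (gamma u)%:M + (gamma u ^+ 3) *: outer3 u.

Definition mf (rho : 'rV[R]_3 -> R) (u : 'rV[R]_3) : 'M[R]_3 :=
  (3 * m_e rho) *: ((phi (eucl3 u))%:M
                     + ((eucl3 u)^-1 * derive1 phi (eucl3 u)) *: outer3 u).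

Definition mass (rho : 'rV[R]_3 -> R) (u : 'rV[R]_3) : 'M[R]_3 := m0 u + mf rho u.

Definition amat (rho : 'rV[R]_3 -> R) (u : 'rV[R]_3) : 'M[R]_3 :=
  (total_charge rho ^+ 2 / (12 * pi)) *: ((gamma u ^+ 4)%:M + (4 * gamma u ^+ 6) *: outer3 u).

End Defs.

(* Main.v *)
Require Import Defs.
From HB Require Import structures.
From mathcomp Require Import all_boot all_order all_algebra.
From mathcomp Require Import all_classical all_reals all_analysis.
From mathcomp Require Import ring lra.
Import Order.TTheory GRing.Theory Num.Theory.
Local Open Scope ring_scope.
Section S.
Import numFieldNormedType.Exports.
Variable R : realType.

Definition LL (x : R) := ln (1 + x) - ln (1 - x).
Lemma dLL (x : R) : -1 < x < 1 -> is_derive x 1 LL (2 / (1 - x^+2)).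
Proof.
move=> /andP[h1 h2].
have p1 : 0 < 1 + x by rewrite -ltrBlDl sub0r.
have p2 : 0 < 1 - x by rewrite subr_gt0.
have d1 : is_derive x 1 (@ln R \o (fun y => 1 + y)) ((1+x)^-1 * 1).
  apply: is_derive1_comp; first exact: is_derive1_ln.
  have := is_deriveD (is_derive_cst (1:R) x 1) (is_derive_id x (1:R)).
  by rewrite add0r.
have d2 : is_derive x 1 (@ln R \o (fun y => 1 - y)) ((1-x)^-1 * (-1)).
  apply: is_derive1_comp; first exact: is_derive1_ln.
  have := is_deriveB (is_derive_cst (1:R) x 1) (is_derive_id x (1:R)).
  by rewrite sub0r.
have H := is_deriveB d1 d2.
have -> : LL = (@ln R \o (fun y => 1 + y)) - (@ln R \o (fun y => 1 - y)) by [].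
apply: is_derive_eq H _.
have q1 : 1 + x != 0 by rewrite gt_eqF.
have q2 : 1 - x != 0 by rewrite gt_eqF.
have q3 : 1 - x^+2 != 0 by rewrite -[1](expr1n _ 2) subr_sqr mulf_neq0 // 1?addrC // expr1n.
field; by rewrite q1 q2 q3.
Qed.

Lemma mono0 (f df : R -> R) (s : R) : 0 <= s < 1 -> f 0 = 0 ->
  (forall x : R, -1 < x < 1 -> is_derive x 1 f (df x)) ->
  (forall x : R, 0 < x < 1 -> 0 <= df x) -> 0 <= f s.
Proof.
move=> /andP[s0 s1] f0 fd dfp.
have inI (x : R) : 0 <= x <= s -> -1 < x < 1.
  move=> /andP[a b]; apply/andP; split; first by apply: lt_le_trans a; rewrite ltrN10.
  exact: le_lt_trans s1.
rewrite -f0; apply: (@ger0_derive1_ndecr R f 0 s) => //.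
- move=> x; rewrite in_itv /= => /andP[a b].
  by have [] := fd x (inI x _); rewrite ?ltW ?a ?b.
- move=> x; rewrite in_itv /= => /andP[a b].
  have xi : 0 <= x <= s by rewrite !ltW.
  have dd := fd x (inI x xi).
  rewrite derive1E derive_val.
  by apply: dfp; rewrite a (lt_trans b s1).
- apply: derivable_within_continuous => x; rewrite in_itv /= => xi.
  by have [] := fd x (inI x xi).
Qed.

Definition g2 (x : R) := 2 * x - (1 - x ^+ 2) * LL x.
Definition hh (x : R) := 3 * (1 - x ^+ 2) ^+ 2 * LL x - 6 * x + 10 * x ^+ 3.
Definition QQ (x : R) := (4 * x ^+ 3 * (1 - x ^+ 2))^-1.
Definition FF (x : R) := g2 x * QQ x.

Lemma LL0 : LL 0 = 0.
Proof. by rewrite /LL addr0 subr0 subrr. Qed.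

Lemma LL_ge0 (x : R) : 0 <= x < 1 -> 0 <= LL x.
Proof.
move=> /andP[x0 x1]; rewrite /LL subr_ge0 ler_ln ?posrE.
- by rewrite lerD2l (le_trans _ x0) // oppr_le0.
- by rewrite subr_gt0.
- by rewrite (lt_le_trans ltr01) // lerDl.
Qed.

Lemma dg2 (x : R) : -1 < x < 1 -> is_derive x 1 g2 (2 * x * LL x).
Proof.
move=> hx.
have d1 := dLL x hx.
have d2 : is_derive x 1 (fun y : R => 1 - y ^+ 2) (- (2 * x)).
  apply: is_derive_eq; rewrite ![_%:A]mulr1; ring.
have d3 : is_derive x 1 (fun y : R => 2 * y) 2.
  by apply: is_derive_eq; rewrite [_%:A]mulr1.
have H := is_deriveB d3 (is_deriveM d2 d1).
have -> : g2 = (fun y : R => 2 * y) - ((fun y : R => 1 - y ^+ 2) * LL) by [].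
apply: is_derive_eq H _.
have [h1 h2] := andP hx.
have q3 : 1 - x^+2 != 0.
  rewrite -[1](expr1n _ 2) subr_sqr mulf_neq0 // ?expr1n gt_eqF //.
  - by rewrite subr_gt0.
  - by rewrite -ltrBlDl sub0r.
rewrite -![_ *: _]/(_ * _). by field.
Qed.

Lemma oneminus_sq_neq0 (x : R) : -1 < x < 1 -> 1 - x ^+ 2 != 0.
Proof.
move=> /andP[h1 h2].
rewrite -[1](expr1n _ 2) subr_sqr mulf_neq0 // ?expr1n gt_eqF //.
- by rewrite subr_gt0.
- by rewrite -ltrBlDl sub0r.
Qed.

Lemma dhh (x : R) : -1 < x < 1 -> is_derive x 1 hh (12 * x * g2 x).
Proof.
move=> hx.
have d1 := dLL x hx.
have d2 : is_derive x 1 (fun y : R => 3 * (1 - y ^+ 2) ^+ 2) (- 12 * x * (1 - x ^+ 2)).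
  apply: is_derive_eq; rewrite ?[_%:A]mulr1 -?[_ *: _]/(_ * _) /=; ring.
have d3 : is_derive x 1 (fun y : R => 6 * y) 6.
  by apply: is_derive_eq; rewrite [_%:A]mulr1.
have d4 : is_derive x 1 (fun y : R => 10 * y ^+ 3) (30 * x ^+ 2).
  apply: is_derive_eq; rewrite ?[_%:A]mulr1 -?[_ *: _]/(_ * _) /=; ring.
have H := is_deriveD (is_deriveB (is_deriveM d2 d1) d3) d4.
have -> : hh = (((fun y : R => 3 * (1 - y ^+ 2) ^+ 2) * LL) - (fun y : R => 6 * y)) + (fun y : R => 10 * y ^+ 3) by [].
apply: is_derive_eq H _.
have q3 := oneminus_sq_neq0 x hx.
rewrite -![_ *: _]/(_ * _) /g2. by field.
Qed.

Lemma dFF (x : R) : 0 < x < 1 ->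
  is_derive x 1 FF (hh x / (4 * x ^+ 4 * (1 - x ^+ 2) ^+ 2)).
Proof.
move=> /andP[x0 x1].
have hx : -1 < x < 1 by rewrite x1 andbT (lt_trans _ x0) // ltrN10.
have q3 := oneminus_sq_neq0 x hx.
have xn0 : x != 0 by rewrite gt_eqF.
have dD : is_derive x 1 (fun y : R => 4 * y ^+ 3 * (1 - y ^+ 2)) (12 * x ^+ 2 - 20 * x ^+ 4).
  apply: is_derive_eq; rewrite ?[_%:A]mulr1 -?[_ *: _]/(_ * _) /=; ring.
have Dn0 : 4 * x ^+ 3 * (1 - x ^+ 2) != 0.
  by rewrite !mulf_neq0 // ?expf_neq0 // pnatr_eq0.
have dQ := is_deriveV (f := fun y : R => 4 * y ^+ 3 * (1 - y ^+ 2)) Dn0 dD.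
have H := is_deriveM (dg2 x hx) dQ.
have -> : FF = g2 * (fun y => (4 * y ^+ 3 * (1 - y ^+ 2))^-1) by [].
apply: is_derive_eq H _.
rewrite -![_ *: _]/(_ * _) /hh /g2. by field; rewrite ?q3 ?xn0.
Qed.

Lemma phi_FF (x : R) : 0 < x < 1 -> phi x = FF x.
Proof.
move=> /andP[x0 x1].
have hx : -1 < x < 1 by rewrite x1 andbT (lt_trans _ x0) // ltrN10.
have q3 := oneminus_sq_neq0 x hx.
have xn0 : x != 0 by rewrite gt_eqF.
have p1 : 0 < 1 + x by rewrite (lt_trans ltr01) // ltrDl.
have p2 : 0 < 1 - x by rewrite subr_gt0.
rewrite /phi (negbTE xn0) /FF /g2 /QQ /LL.
rewrite lnM ?posrE ?invr_gt0 // lnV ?posrE //.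
have q1 : 1 + x != 0 by rewrite gt_eqF.
have q2 : 1 - x != 0 by rewrite gt_eqF.
by field; rewrite ?q1 ?q2 ?q3 ?xn0.
Qed.

Lemma g2_ge0 (x : R) : 0 <= x < 1 -> 0 <= g2 x.
Proof.
move=> hx; apply: (@mono0 g2 (fun y => 2 * y * LL y)) => //.
- by rewrite /g2 LL0 !mulr0 subr0.
- exact: dg2.
- move=> y /andP[y0 y1]; apply: mulr_ge0; first by apply: mulr_ge0 => //; exact: ltW.
  by apply: LL_ge0; rewrite (ltW y0) y1.
Qed.

Lemma hh_ge0 (x : R) : 0 <= x < 1 -> 0 <= hh x.
Proof.
move=> hx; apply: (@mono0 hh (fun y => 12 * y * g2 y)); first exact: hx.
- rewrite /hh LL0; ring.
- exact: dhh.
- move=> y /andP[y0 y1]; apply: mulr_ge0; first by apply: mulr_ge0 => //; exact: ltW.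
  by apply: g2_ge0; rewrite (ltW y0) y1.
Qed.

Lemma phi_ge0 (x : R) : 0 <= x < 1 -> 0 <= phi x.
Proof.
move=> /andP[x0 x1].
have [->|xn0] := eqVneq x 0; first by rewrite /phi eqxx invr_ge0.
have xp : 0 < x by rewrite lt_def xn0.
rewrite phi_FF ?xp // /FF mulr_ge0 ?g2_ge0 ?x0 // /QQ invr_ge0 !mulr_ge0 ?exprn_ge0 //.
rewrite subr_ge0 -[1](expr1n _ 2) ler_pXn2r ?nnegrE ?ltW //.
Qed.

Lemma dphi_ge0 (x : R) : 0 < x < 1 -> 0 <= derive1 (@phi R) x.
Proof.
move=> hx.
have fg : \forall y \near x, FF y = phi y.
  apply: filterS (near_in_itvoo _); last by rewrite in_itv /=; exact: hx.
  by move=> y; rewrite in_itv /= => yi; rewrite phi_FF.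
have d := near_eq_is_derive fg (dFF x hx).
rewrite derive1E derive_val.
have [x0 x1] := andP hx.
apply: divr_ge0; first by apply: hh_ge0; rewrite (ltW x0) x1.
apply: mulr_ge0; [apply: mulr_ge0 => //; apply: exprn_ge0; exact: ltW | exact: sqr_ge0].
Qed.
End S.

Section M.
Variable R : realType.
Definition qf (M : 'M[R]_3) (w : 'rV[R]_3) : R := (w *m M *m w^T) 0 0.

Lemma qfD A B w : qf (A + B) w = qf A w + qf B w.
Proof. by rewrite /qf mulmxDr mulmxDl mxE. Qed.

Lemma qfZ k A w : qf (k *: A) w = k * qf A w.
Proof. by rewrite /qf -scalemxAr -scalemxAl mxE. Qed.

Lemma mulT00 (u w : 'rV[R]_3) : (w *m u^T) 0 0 = dot3 u w.
Proof. by rewrite mxE /dot3; apply: eq_bigr => i _; rewrite mxE mulrC. Qed.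

Lemma qf_scalar a w : qf a%:M w = a * dot3 w w.
Proof. by rewrite /qf mul_mx_scalar -scalemxAl mxE mulT00. Qed.

Lemma qf_outer u w : qf (outer3 u) w = dot3 u w ^+ 2.
Proof.
rewrite /qf /outer3 (mulmxA w) -(mulmxA (w *m u^T)) mxE big_ord1 !mulT00 expr2.
by congr (_ * _); apply: eq_bigr => i _; rewrite mulrC.
Qed.

Lemma dot3E (u w : 'rV[R]_3) : dot3 u w = u 0 0 * w 0 0 + u 0 1 * w 0 1 + u 0 2%:R * w 0 2%:R.
Proof.
rewrite /dot3 !big_ord_recr big_ord0 /= add0r.
by congr (_ * _ + _ * _ + _ * _); congr (_ _ _); apply: val_inj.
Qed.

Lemma dot_ge0 (w : 'rV[R]_3) : 0 <= dot3 w w.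
Proof. by apply: sumr_ge0 => i _; rewrite -expr2 sqr_ge0. Qed.

Lemma dot_gt0 (w : 'rV[R]_3) : w != 0 -> 0 < dot3 w w.
Proof.
move=> wn0; rewrite lt_def dot_ge0 andbT; apply: contra wn0 => /eqP d0.
apply/eqP/rowP => j; rewrite mxE.
have : w 0 j ^+ 2 <= 0.
  rewrite -d0 /dot3 (bigD1 j) //= -expr2 lerDl.
  by apply: sumr_ge0 => i _; rewrite -expr2 sqr_ge0.
by rewrite le_eqVlt ltNge sqr_ge0 orbF sqrf_eq0 => /eqP.
Qed.

Lemma cauchy (u w : 'rV[R]_3) : dot3 u w ^+ 2 <= dot3 u u * dot3 w w.
Proof.
rewrite !dot3E -subr_ge0.
set a := u 0 0; set b := u 0 1; set c := u 0 2%:R.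
set x := w 0 0; set y := w 0 1; set z := w 0 2%:R.
have -> : (a * a + b * b + c * c) * (x * x + y * y + z * z) - (a * x + b * y + c * z) ^+ 2
  = (a * y - b * x) ^+ 2 + (a * z - c * x) ^+ 2 + (b * z - c * y) ^+ 2 by ring.
by rewrite !addr_ge0 ?sqr_ge0.
Qed.
End M.

Section Main.
Variable R : realType.

Lemma me_ge0 (rho : 'rV[R]_3 -> R) : 0 <= m_e rho.
Proof.
rewrite /m_e mulr_ge0 ?invr_ge0 // /int3.
apply: Rintegral_ge0 => p _.
rewrite divr_ge0 ?exprn_ge0 ?sqrtr_ge0 // /fourier_abs2.
by rewrite addr_ge0 ?sqr_ge0.
Qed.

Lemma scalar0_3 : (0 : R)%:M = 0 :> 'M[R]_3.
Proof. by apply/matrixP => i j; rewrite !mxE mul0rn. Qed.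

End Main.
Arguments qf {R}. Arguments cauchy {R}. Arguments dot_ge0 {R}.
Arguments dot_gt0 {R}. Arguments me_ge0 {R}.

Theorem lemma4p1 (R : realType) (rho : 'rV[R]_3 -> R)
  (rho_smooth : smooth3 rho) (rho_supp : compact_support3 rho)
  (rho_radial : radial3 rho) (rho_charge : total_charge rho != 0) :
  forall delta : R, 0 < delta <= 1 ->
  exists c : R, 0 < c /\
    forall (u : 'rV[R]_3), eucl3 u <= 1 - delta ->
    forall lambda : R, eigenvalue (invmx (amat rho u) *m mass rho u) lambda ->
    c <= lambda.
Proof.
move=> delta /andP[d0 d1].
set K := total_charge rho ^+ 2 / (12 * pi).
have Kp : 0 < K.
  rewrite /K divr_gt0 //; last by rewrite mulr_gt0 // pi_gt0.
  by rewrite lt_def sqr_ge0 andbT sqrf_eq0.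
set m := 1 - (1 - delta) ^+ 2.
have mp : 0 < m.
  have -> : m = delta * (2 - delta) by rewrite /m; ring.
  by rewrite mulr_gt0 // subr_gt0 (le_lt_trans d1) // ltr1n.
set G := (Num.sqrt m)^-1.
have sm : 0 < Num.sqrt m by rewrite sqrtr_gt0.
have G1 : 1 <= G.
  by rewrite /G invf_ge1 // -sqrtr1 ler_sqrt // /m gerBl sqr_ge0.
have G0 : 0 <= G := le_trans ler01 G1.
set C := K * (G ^+ 4 + 4 * G ^+ 6).
have Cp : 0 < C by rewrite /C mulr_gt0 // addr_gt0 ?mulr_gt0 ?exprn_gt0 // (lt_le_trans ltr01 G1).
exists C^-1; split; first by rewrite invr_gt0.
move=> u us lambda /eigenvalueP [v hv vn0].
set s := eucl3 u.
have s0 : 0 <= s by rewrite /s /eucl3 sqrtr_ge0.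
have s1 : s < 1 by apply: le_lt_trans us _; rewrite ltrBlDr ltrDl.
have ss : s ^+ 2 = dot3 u u by rewrite /s /eucl3 sqr_sqrtr // dot_ge0.
have s21 : s ^+ 2 <= 1 by nra.
set g := gamma u.
have gE : g = (Num.sqrt (1 - s ^+ 2))^-1 by [].
have q0 : 0 < 1 - s ^+ 2 by nra.
have sq0 : 0 < Num.sqrt (1 - s ^+ 2) by rewrite sqrtr_gt0.
have g1 : 1 <= g by rewrite gE invf_ge1 // -[X in _ <= X]sqrtr1 ler_sqrt // gerBl sqr_ge0.
have g0 : 0 <= g := le_trans ler01 g1.
have gG : g <= G.
  rewrite gE /G lef_pV2 ?posrE // ler_sqrt; last by apply: ltW.
  have h1 : 0 <= 1 - delta - s by rewrite subr_ge0.
  have h2 : 0 <= 1 - delta + s by rewrite addr_ge0 // subr_ge0.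
  have := mulr_ge0 h1 h2.
  rewrite /m; nra.
have qA : forall w, qf (amat rho u) w = K * (g ^+ 4 * dot3 w w + 4 * g ^+ 6 * dot3 u w ^+ 2).
  by move=> w; rewrite /amat qfZ qfD qf_scalar qfZ qf_outer.
have qM : forall w, qf (mass rho u) w = g * dot3 w w + g ^+ 3 * dot3 u w ^+ 2
   + 3 * m_e rho * (phi s * dot3 w w + (s^-1 * derive1 (@phi R) s) * dot3 u w ^+ 2).
  by move=> w; rewrite /mass /m0 /mf !qfD qf_scalar qfZ qf_outer qfZ qfD qf_scalar qfZ qf_outer.
have me0 := me_ge0 rho.
have ph0 : 0 <= phi s by apply: phi_ge0; rewrite s0 s1.
have c10 : 0 <= s^-1 * derive1 (@phi R) s.
  have [->|sn0] := eqVneq s 0; first by rewrite invr0 mul0r.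
  have sp : 0 < s by rewrite lt_def sn0 s0.
  by rewrite mulr_ge0 ?invr_ge0 // dphi_ge0 // sp s1.
have lowM : forall w, dot3 w w <= qf (mass rho u) w.
  move=> w; rewrite qM.
  have n0 := dot_ge0 w.
  have t0 : 0 <= dot3 u w ^+ 2 by apply: sqr_ge0.
  have e1 : 0 <= phi s * dot3 w w + s^-1 * derive1 (@phi R) s * dot3 u w ^+ 2.
    by rewrite addr_ge0 // mulr_ge0.
  have e2 : 0 <= 3 * m_e rho * (phi s * dot3 w w + s^-1 * derive1 (@phi R) s * dot3 u w ^+ 2).
    by rewrite mulr_ge0 // mulr_ge0.
  have e3 : 0 <= g ^+ 3 * dot3 u w ^+ 2 by rewrite mulr_ge0 // exprn_ge0.
  have e4 : dot3 w w <= g * dot3 w w by rewrite ler_peMl.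
  by rewrite -addrA; apply: le_trans e4 _; rewrite lerDl addr_ge0.
have upA : forall w, qf (amat rho u) w <= C * dot3 w w.
  move=> w; rewrite qA /C -[K * _ * _]mulrA ler_pM2l //.
  have n0 := dot_ge0 w.
  have cs := cauchy u w.
  rewrite -ss in cs.
  have t1 : dot3 u w ^+ 2 <= dot3 w w.
    by apply: le_trans cs _; rewrite ler_piMl.
  have g4 : g ^+ 4 <= G ^+ 4 by rewrite lerXn2r ?nnegrE.
  have g6 : g ^+ 6 <= G ^+ 6 by rewrite lerXn2r ?nnegrE.
  have g40 : 0 <= g ^+ 4 by rewrite exprn_ge0.
  have g60 : 0 <= g ^+ 6 by rewrite exprn_ge0.
  rewrite [X in _ <= X]mulrDl; apply: lerD; first by rewrite ler_wpM2r.
  rewrite -[4 * _ * dot3 u w ^+ 2]mulrA -[4 * _ * dot3 w w]mulrA ler_wpM2l //.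
  apply: (@le_trans _ _ (g ^+ 6 * dot3 w w)); first by apply: ler_wpM2l.
  by apply: ler_wpM2r.
have posA : forall w, w != 0 -> 0 < qf (amat rho u) w.
  move=> w wn0; rewrite qA mulr_gt0 //.
  apply: (@lt_le_trans _ _ (g ^+ 4 * dot3 w w)).
    by rewrite mulr_gt0 ?dot_gt0 // exprn_gt0 // (lt_le_trans ltr01 g1).
  by rewrite lerDl mulr_ge0 ?sqr_ge0 // mulr_ge0 // exprn_ge0.
have Au : amat rho u \in unitmx.
  rewrite -row_free_unit -kermx_eq0; apply/negPn/negP => H.
  have : eigenvalue (amat rho u) 0 by rewrite /eigenvalue /eigenspace scalar0_3 subr0.
  move=> /eigenvalueP [z hz zn0].
  have := posA z zn0.
  by rewrite /qf hz scale0r mul0mx mxE ltxx.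
set w := v *m invmx (amat rho u).
have vw : v = w *m amat rho u by rewrite /w -mulmxA mulVmx // mulmx1.
have wn0 : w != 0.
  by apply: contra vn0 => /eqP w0; rewrite vw w0 mul0mx.
have hw : w *m mass rho u = lambda *: (w *m amat rho u).
  by rewrite -vw /w -mulmxA.
have eqq : qf (mass rho u) w = lambda * qf (amat rho u) w.
  by rewrite /qf hw -scalemxAl mxE.
have qAp := posA w wn0.
rewrite -(ler_pM2r qAp) -eqq.
apply: le_trans (lowM w).
rewrite -(ler_pM2l Cp) mulrA mulfV ?gt_eqF // mul1r.
exact: upA.
Qed.
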